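(* Let $\mathcal G\in\mathbb G^4_S$ have decomposition $\mathcal G=\mathcal G_{cpi}+\mathcal G_{cyclic}$, where $\mathcal G_{cpi}$ has edge weights $\omega_j+\omega_k$ and $\mathcal G_{cyclic}=u\,\mathbf b^4_{1,4,2,3}+v\,\mathbf b^4_{1,2,3,4}$, i.e. $\mathcal G_{cyclic}$ has weights $v$ on $\{V_1,V_2\},\{V_3,V_4\}$, $u-v$ on $\{V_2,V_3\},\{V_1,V_4\}$, and $-u$ on $\{V_1,V_3\},\{V_2,V_4\}$. Let $\omega=\min(\omega_1,\omega_2,\omega_3,\omega_4)$. Then $\mathcal G$ satisfies the triangle inequality ($d_{i,k}\le d_{i,j}+d_{j,k}$ for all distinct $i,j,k$) if and only if $\omega\ge-u$, $\omega\ge v$ and $\omega\ge u-v$. In particular, if some $\omega_j<0$ then $\mathcal G$ does not satisfy the triangle inequality.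
   Context: $\mathbb G^4_S$ is the space of complete undirected weighted graphs without loops on $V_1,\dots,V_4$ with edge weights $d_{i,j}=d_{j,i}$, identified with $\mathbb R^6$ with the standard inner product. $\mathcal G_{cpi}$ is the orthogonal projection onto the subspace of graphs with $d_{j,k}=\omega_j+\omega_k$ for some reals $\omega_j$, and $\mathcal G_{cyclic}=\mathcal G-\mathcal G_{cpi}$ lies in its orthogonal complement, which is spanned by $\mathbf b^4_{1,4,2,3}$ and $\mathbf b^4_{1,2,3,4}$; here $\mathbf b^4_{i,j,k,s}$ has $d_{i,j}=1,d_{j,k}=-1,d_{k,s}=1,d_{s,i}=-1$ and other entries 0. *)

(* Defs.v *)
(* Vertices V_1..V_4 are the ordinals 0..3 of 'I_4. *)
From mathcomp Require Import all_boot all_order all_algebra.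
Set Implicit Arguments. Unset Strict Implicit. Unset Printing Implicit Defensive.
Import Order.TTheory GRing.Theory Num.Theory.
Local Open Scope ring_scope.

(* A weighted complete graph on 4 vertices, given by its weight function
   d a b (only the values for a != b matter). *)
Definition graph4 (R : Type) := 'I_4 -> 'I_4 -> R.

Definition V (k : nat) : 'I_4 := inord k.-1.

Definition same_edge (a b x y : 'I_4) : bool :=
  ((a == x) && (b == y)) || ((a == y) && (b == x)).

Definition b4 (R : numDomainType) (i j k s : 'I_4) : graph4 R :=
  fun a b =>
    if same_edge a b i j then 1
    else if same_edge a b j k then -1
    else if same_edge a b k s then 1
    else if same_edge a b s i then -1
    else 0.

Definition cpi_graph (R : numDomainType) (omega : 'I_4 -> R) : graph4 R :=
  fun a b => omega a + omega b.

Definition triangle_ineq (R : numDomainType) (G : graph4 R) : Prop :=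
  forall i j k : 'I_4, i != j -> j != k -> i != k ->
    G i k <= G i j + G j k.

Definition min4 (R : realDomainType) (omega : 'I_4 -> R) : R :=
  Num.min (Num.min (omega (V 1)) (omega (V 2)))
          (Num.min (omega (V 3)) (omega (V 4))).

(* Main.v *)
Require Import Defs.
From mathcomp Require Import all_boot all_order all_algebra.
From mathcomp Require Import lra.
Import Order.TTheory GRing.Theory Num.Theory.
Local Open Scope ring_scope.

Theorem theorem17 (R : realFieldType) (G : graph4 R) (omega : 'I_4 -> R)
    (u v : R)
    (hG : forall a b : 'I_4, a != b ->
       G a b = cpi_graph omega a b
               + u * b4 R (V 1) (V 4) (V 2) (V 3) a b
               + v * b4 R (V 1) (V 2) (V 3) (V 4) a b) :
  (triangle_ineq G <->
     [/\ - u <= min4 omega, v <= min4 omega & u - v <= min4 omega])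
  /\ ((exists j : 'I_4, omega j < 0) -> ~ triangle_ineq G).
Proof.
pose o0 : 'I_4 := Ordinal (isT : 0 < 4)%N.
pose o1 : 'I_4 := Ordinal (isT : 1 < 4)%N.
pose o2 : 'I_4 := Ordinal (isT : 2 < 4)%N.
pose o3 : 'I_4 := Ordinal (isT : 3 < 4)%N.
have V1 : V 1 = o0 by apply/val_inj; rewrite /= inordK.
have V2 : V 2 = o1 by apply/val_inj; rewrite /= inordK.
have V3 : V 3 = o2 by apply/val_inj; rewrite /= inordK.
have V4 : V 4 = o3 by apply/val_inj; rewrite /= inordK.
have E : forall P : 'I_4 -> Prop, P o0 -> P o1 -> P o2 -> P o3 -> forall j, P j.
  move=> P p0 p1 p2 p3 [[|[|[|[|j]]]] Hj] //.
  - by rewrite (bool_irrelevance Hj isT).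
  - by rewrite (bool_irrelevance Hj isT).
  - by rewrite (bool_irrelevance Hj isT).
  - by rewrite (bool_irrelevance Hj isT).
have Hmin : forall X, X <= min4 omega <->
   [/\ X <= omega o0, X <= omega o1, X <= omega o2 & X <= omega o3].
  move=> X; rewrite /min4 V1 V2 V3 V4 !le_min; split.
    by case/andP=> /andP[-> ->] /andP[-> ->].
  by case=> -> -> -> ->.
have main : triangle_ineq G <->
     [/\ - u <= min4 omega, v <= min4 omega & u - v <= min4 omega].
  split.
  - move=> T.
    have t i j k (a : i != j) (b : j != k) (c : i != k) := T i j k a b c.
    have := t o1 o0 o2 isT isT isT.
    have := t o1 o0 o3 isT isT isT.
    have := t o2 o0 o3 isT isT isT.
    have := t o0 o1 o2 isT isT isT.
    have := t o0 o1 o3 isT isT isT.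
    have := t o2 o1 o3 isT isT isT.
    have := t o0 o2 o1 isT isT isT.
    have := t o0 o2 o3 isT isT isT.
    have := t o1 o2 o3 isT isT isT.
    have := t o0 o3 o1 isT isT isT.
    have := t o0 o3 o2 isT isT isT.
    have := t o1 o3 o2 isT isT isT.
    rewrite !hG // /cpi_graph /b4 V1 V2 V3 V4 /same_edge /=.
    rewrite ?mulr1 ?mulr0 ?mulrN1 ?addr0.
    move=> *; split; apply/Hmin; split; lra.
  - move=> [/Hmin[a0 a1 a2 a3] /Hmin[b0 b1 b2 b3] /Hmin[c0 c1 c2 c3]].
    rewrite /triangle_ineq.
    apply: (E); apply: (E); apply: (E) => //.
    1-24: move=> a b c; rewrite !hG // /cpi_graph /b4 V1 V2 V3 V4 /same_edge /=.
    1-24: rewrite ?mulr1 ?mulr0 ?mulrN1 ?addr0; lra.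
split=> //.
move=> [j Hj] /main.
move=> [/Hmin[a0 a1 a2 a3] /Hmin[b0 b1 b2 b3] /Hmin[c0 c1 c2 c3]].
move: j Hj; apply: (E (fun j => omega j < 0 -> False)) => H; suff: (0:R) < 0 by rewrite ltxx.
all: lra.
Qed.
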